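(* Let $A$ be a rational matrix with $m$ rows and $n$ columns, and let $b$ and $c$ be rational vectors. Consider the following procedure $\mathrm{maximize}(A,b,c)$. If $b$ has length $m$ and $c$ has length $n$, it forms the following finite list of non-strict linear constraints over rational variables $z_0,\dots,z_{n+m-1}$, where one writes $x=(z_0,\dots,z_{n-1})$ and $y=(z_n,\dots,z_{n+m-1})$: (i) $c\cdot x \ge b\cdot y$; (ii) $(Ax)_i \le b_i$ for each $i<m$; (iii) $(A^{T}y)_j = c_j$ for each $j<n$; (iv) $y_i\ge 0$ for each $i<m$. It then calls a simplex decision procedure on this list. That procedure either returns $\mathrm{Unsat}$ together with a list of constraint indices, or returns $\mathrm{Sat}$ together with an assignment of rational values to the variables that satisfies every constraint in the list. In the first case $\mathrm{maximize}$ returns $\mathrm{Some}(\mathrm{Unsat}(\ldots))$; in the second case it returns $\mathrm{Some}(\mathrm{Sat}(x,y))$, where $x\in\mathbb{Q}^n$ consists of the values of $z_0,\dots,z_{n-1}$ and $y\in\mathbb{Q}^m$ consists of the values of $z_n,\dots,z_{n+m-1}$. If the length conditions on $b$ and $c$ fail, it returns $\mathrm{None}$. Claim: if $\mathrm{maximize}(A,b,c)=\mathrm{Some}(\mathrm{Sat}(x,y))$, then $x$ is an optimal solution of the linear program ''maximize $c\cdot x$ subject to $Ax\le b$''. That is, $Ax\le b$ holds componentwise, and $c\cdot v\le c\cdot x$ for every $v\in\mathbb{Q}^n$ with $Av\le b$ componentwise.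
   Context: $\cdot$ denotes the dot product of vectors, and $\le$ between vectors is the componentwise order. The simplex decision procedure is sound: whenever it returns $\mathrm{Sat}$, the returned assignment satisfies all the constraints it was given. The set of optimal solutions of the primal program (''max_lp $A$ $b$ $c$'' in the paper) is $\{x : Ax\le b \text{ and } \forall v\,(Av\le b \Rightarrow v\cdot c\le x\cdot c)\}$. *)

(* Defs.v *)
From HB Require Import structures.
From mathcomp Require Import all_boot all_order all_algebra.
Set Implicit Arguments. Unset Strict Implicit. Unset Printing Implicit Defensive.
Import Order.TTheory GRing.Theory Num.Theory.
Local Open Scope ring_scope.

(* A linear polynomial: a list of (variable index, coefficient) pairs,
   denoting  sum_k coeff_k * z_(index_k). *)
Definition linpoly := seq (nat * rat).

Definition eval_lp (p : linpoly) (v : nat -> rat) : rat :=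
  \sum_(t <- p) t.2 * v t.1.

Inductive constraint :=
| LEQ of linpoly & rat
| GEQ of linpoly & rat
| EQ  of linpoly & rat.

Definition satisfies (v : nat -> rat) (k : constraint) : Prop :=
  match k with
  | LEQ p r => eval_lp p v <= r
  | GEQ p r => r <= eval_lp p v
  | EQ p r => eval_lp p v = r
  end.

Inductive simplex_result :=
| Unsat of seq nat
| Sat of (nat -> rat).

(* List membership (constraint has no eqType). *)
Fixpoint inlist (k : constraint) (cs : seq constraint) : Prop :=
  match cs with nil => False | cons k' cs' => k' = k \/ inlist k cs' end.

Definition simplex_sound (simplex : seq constraint -> simplex_result) : Prop :=
  forall cs v, simplex cs = Sat v -> forall k, inlist k cs -> satisfies v k.

Inductive max_result (m n : nat) :=
| MUnsat of seq nat
| MSat of 'cV[rat]_n & 'cV[rat]_m.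
Arguments MUnsat {m n}.
Arguments MSat {m n}.

(* Vector from a list (used when the length is right). *)
Definition vec_of (k : nat) (s : seq rat) : 'cV[rat]_k := \col_(i < k) nth 0 s i.

(* Constraint list; x_j = z_j (j < n),  y_i = z_(n+i) (i < m). *)
Definition lp_constraints (m n : nat) (A : 'M[rat]_(m, n)) (b c : seq rat)
  : seq constraint :=
  (* (i) c.x >= b.y, written as c.x - b.y >= 0 *)
  GEQ ([seq (nat_of_ord j, nth 0 c j) | j <- enum 'I_n]
       ++ [seq ((n + nat_of_ord i)%N, - nth 0 b i) | i <- enum 'I_m]) 0
  :: [seq LEQ [seq (nat_of_ord j, A i j) | j <- enum 'I_n] (nth 0 b i)
       | i <- enum 'I_m]
  ++ [seq EQ [seq ((n + nat_of_ord i)%N, A i j) | i <- enum 'I_m] (nth 0 c j)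
       | j <- enum 'I_n]
  ++ [seq GEQ [:: ((n + nat_of_ord i)%N, 1)] 0 | i <- enum 'I_m].

Definition maximize (simplex : seq constraint -> simplex_result)
  (m n : nat) (A : 'M[rat]_(m, n)) (b c : seq rat) : option (max_result m n) :=
  if (size b == m) && (size c == n) then
    match simplex (lp_constraints A b c) with
    | Unsat ks => Some (MUnsat ks)
    | Sat v => Some (MSat (\col_(j < n) v (nat_of_ord j))
                         (\col_(i < m) v (n + nat_of_ord i)%N))
    end
  else None.

Definition dotv (k : nat) (u w : 'cV[rat]_k) : rat := \sum_(i < k) u i 0 * w i 0.

Definition lev (k : nat) (u w : 'cV[rat]_k) : Prop := forall i, u i 0 <= w i 0.

Definition max_lp (m n : nat) (A : 'M[rat]_(m, n)) (b : 'cV[rat]_m) (c : 'cV[rat]_n)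
  (x : 'cV[rat]_n) : Prop :=
  lev (A *m x) b /\ forall v : 'cV[rat]_n, lev (A *m v) b -> dotv v c <= dotv x c.

(* Main.v *)
Require Import Defs.
From mathcomp Require Import all_boot all_order all_algebra.
From mathcomp Require Import ring.
Import Order.TTheory GRing.Theory Num.Theory.
Local Open Scope ring_scope.

Lemma inlist_catl k s1 s2 : inlist k s1 -> inlist k (s1 ++ s2).
Proof. elim: s1 => //= a s IH [->|H]; [by left|right; exact: IH]. Qed.

Lemma inlist_catr k s1 s2 : inlist k s2 -> inlist k (s1 ++ s2).
Proof. elim: s1 => //= a s IH H; right; exact: IH. Qed.

Lemma inlist_map (T : eqType) (f : T -> constraint) (s : seq T) i :
  i \in s -> inlist (f i) (map f s).
Proof.
elim: s => //= a s IH; rewrite inE => /orP [/eqP ->|H]; [by left|right; exact: IH].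
Qed.

Lemma inlist_enum (T : finType) (f : T -> constraint) i :
  inlist (f i) (map f (enum T)).
Proof. by apply: inlist_map; rewrite mem_enum. Qed.

Lemma eval_map k (f : 'I_k -> nat * rat) v :
  eval_lp [seq f j | j <- enum 'I_k] v = \sum_(j < k) (f j).2 * v (f j).1.
Proof. by rewrite /eval_lp big_map big_enum. Qed.

Theorem mainTheorem2
  (simplex : seq constraint -> simplex_result) (Hsound : simplex_sound simplex)
  (m n : nat) (A : 'M[rat]_(m, n)) (b c : seq rat)
  (x : 'cV[rat]_n) (y : 'cV[rat]_m) :
  maximize simplex A b c = Some (MSat x y) ->
  max_lp A (vec_of m b) (vec_of n c) x.
Proof.
rewrite /maximize; case: ifP => // _.
case E: (simplex _) => [//|v] [Ex Ey].
have S := Hsound _ _ E.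
have H1 : 0 <= \sum_(j < n) nth 0 c j * v j - \sum_(i < m) nth 0 b i * v (n + i)%N.
  have := S _ (or_introl erefl); rewrite /= /eval_lp big_cat /=.
  rewrite -/(eval_lp _ v) -/(eval_lp _ v) !eval_map /=.
  by move=> G; rewrite (eq_bigr _ (fun i _ => mulNr _ _)) sumrN in G.
have H2 : forall i : 'I_m, \sum_(j < n) A i j * v j <= nth 0 b i.
  move=> i; have := S _ (or_intror (@inlist_catl _ _ _ (@inlist_enum _
     (fun i => LEQ [seq (nat_of_ord j, A i j) | j <- enum 'I_n] (nth 0 b i)) i))).
  by rewrite /= eval_map.
have H3 : forall j : 'I_n, \sum_(i < m) A i j * v (n + i)%N = nth 0 c j.
  move=> j; have := S _ (or_intror (@inlist_catr _ _ _ (@inlist_catl _ _ _ (@inlist_enum _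
     (fun j => EQ [seq ((n + nat_of_ord i)%N, A i j) | i <- enum 'I_m] (nth 0 c j)) j)))).
  by rewrite /= eval_map.
have H4 : forall i : 'I_m, 0 <= v (n + i)%N.
  move=> i; have := S _ (or_intror (@inlist_catr _ _ _ (@inlist_catr _ _ _ (@inlist_enum _
     (fun i : 'I_m => GEQ [:: ((n + nat_of_ord i)%N, 1)] 0) i)))).
  by rewrite /= /eval_lp big_cons big_nil /= mul1r addr0.
subst x y; split.
  move=> i; rewrite !mxE; apply: le_trans (H2 i); rewrite le_eqVlt; apply/orP; left.
  by apply/eqP; apply: eq_bigr => j _; rewrite mxE.
move=> w Hw.
have Hdx : dotv (\col_(j < n) v j) (vec_of n c) = \sum_(j < n) nth 0 c j * v j.
  by apply: eq_bigr => j _; rewrite !mxE mulrC.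
rewrite Hdx.
apply: le_trans (_ : \sum_(i < m) nth 0 b i * v (n + i)%N <= _); last by rewrite -subr_ge0.
have -> : dotv w (vec_of n c) = \sum_(i < m) v (n + i)%N * (A *m w) i 0.
  rewrite /dotv; under eq_bigr do rewrite mxE -H3 mulr_sumr.
  rewrite exchange_big /=; apply: eq_bigr => i _; rewrite mxE mulr_sumr.
  by apply: eq_bigr => j _; ring.
apply: ler_sum => i _; rewrite mulrC; apply: (ler_wpM2r (H4 i)).
by move: (Hw i); rewrite /vec_of [in X in _ <= X]mxE.
Qed.
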